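(* Let $\pi$ be the free group of rank two with presentation $\langle A_1,A_2,A_3\mid A_1A_2A_3=\mathbb{I}\rangle$, and let $\rho_0:\pi\to\mathsf{SO}(2,1)^0$ be a homomorphism such that each $\rho_0(A_i)$ ($i=1,2,3$) is hyperbolic or parabolic and $\rho_0(\pi)$ is not solvable. For each $i$ choose $\mathsf{v}_i\in\mathrm{Fix}(\rho_0(A_i))$ positive relative to $\rho_0(A_i)$, and define $\mu_i:H^1(\pi,V)\to\mathbb{R}$ by $\mu_i([u])=u(A_i)\cdot\mathsf{v}_i$ (the value of $(\rho(A_i)(x)-x)\cdot\mathsf{v}_i$ for the affine deformation $\rho$ with translational part $u$). Then $\mu=(\mu_1,\mu_2,\mu_3):H^1(\pi,V)\to\mathbb{R}^3$ is a well-defined linear isomorphism of vector spaces.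
   Context: $V=\mathbb{R}^3$ with the Lorentzian inner product $x\cdot y=x_1y_1+x_2y_2-x_3y_3$ and its standard orientation, regarded as a $\pi$-module via $\rho_0$; $\mathsf{SO}(2,1)^0$ is the identity component of its isometry group. $H^1(\pi,V)$ is group cohomology: cocycles $u:\pi\to V$ with $u(gh)=u(g)+\rho_0(g)u(h)$ modulo coboundaries $g\mapsto \rho_0(g)x-x$. A nonidentity $g\in\mathsf{SO}(2,1)^0$ is hyperbolic if it has three distinct real eigenvalues and parabolic if its only eigenvalue is $1$; then $\mathrm{Fix}(g)$ is a line. A vector $\mathsf{v}\in\mathrm{Fix}(g)$ is positive relative to $g$ if $(\mathsf{v},x,gx)$ is a positively oriented basis for any null ($x\cdot x=0$) or timelike ($x\cdot x<0$) vector $x$ that is not an eigenvector of $g$. An affine deformation with translational part $u$ is $\rho(g)(x)=\rho_0(g)x+u(g)$. *)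

(* Defs.v *)
From HB Require Import structures.
From mathcomp Require Import all_boot all_order all_algebra.
From mathcomp Require Import reals.
Set Implicit Arguments. Unset Strict Implicit. Unset Printing Implicit Defensive.
Import Order.TTheory GRing.Theory Num.Theory.
Local Open Scope ring_scope.

(* letters: (generator index among {A1, A2}, inverted?) *)
Definition letter := ('I_2 * bool)%type.
Definition linv (x : letter) : letter := (x.1, ~~ x.2).
Definition nocancel (x y : letter) : bool := y != linv x.
Definition reduced (w : seq letter) : bool := sorted nocancel w.

Definition cons_red (x : letter) (w : seq letter) : seq letter :=
  if w is y :: w' then (if y == linv x then w' else x :: w) else [:: x].
Definition red (w : seq letter) : seq letter := foldr cons_red [::] w.

Lemma cons_red_reduced x w : reduced w -> reduced (cons_red x w).
Proof.
case: w => [|y w] //= Hw; case: ifP => Hy.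
  by case: w Hw => //= z w /andP[].
by rewrite /reduced /= /nocancel Hy.
Qed.

Lemma red_reduced w : reduced (red w).
Proof. by elim: w => [|x w IH] //=; apply: cons_red_reduced. Qed.

Definition F2 := {w : seq letter | reduced w}.
Definition F2one : F2 := exist _ [::] isT.
Definition F2mul (g h : F2) : F2 := exist _ (red (sval g ++ sval h)) (red_reduced _).
Definition F2inv (g : F2) : F2 := exist _ (red (rev (map linv (sval g)))) (red_reduced _).
Definition F2gen (i : 'I_2) : F2 := exist _ (red [:: (i, false)]) (red_reduced _).

Definition A1 : F2 := F2gen 0.
Definition A2 : F2 := F2gen 1.
Definition A3 : F2 := F2inv (F2mul A1 A2).   (* so that A1 A2 A3 = 1 *)
Definition Agen (i : 'I_3) : F2 :=
  if (i : nat) == 0%N then A1 else if (i : nat) == 1%N then A2 else A3.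

Section Lorentz.
Variable R : realType.

Definition lor (x y : 'cV[R]_3) : R :=
  x (inord 0) 0 * y (inord 0) 0 + x (inord 1) 0 * y (inord 1) 0
  - x (inord 2) 0 * y (inord 2) 0.

Definition Jmx : 'M[R]_3 :=
  \matrix_(i < 3, j < 3) (if i == j then (if (i : nat) == 2%N then -1 else 1) else 0).

(* identity component SO(2,1)^0: Lorentz isometries of determinant 1
   preserving the future time cone (entry (3,3) positive) *)
Definition SO21_0 (M : 'M[R]_3) : Prop :=
  M^T *m Jmx *m M = Jmx /\ \det M = 1 /\ 0 < M (inord 2) (inord 2).

Definition hyperbolic (M : 'M[R]_3) : Prop :=
  M != 1%:M /\ exists a b c : R,
    [/\ eigenvalue M a, eigenvalue M b, eigenvalue M c & [/\ a != b, b != c & a != c]].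

(* the only (complex) eigenvalue is 1: characteristic polynomial (X-1)^3 *)
Definition parabolic (M : 'M[R]_3) : Prop :=
  M != 1%:M /\ char_poly M = ('X - 1%:P) ^+ 3.

Definition Fixv (M : 'M[R]_3) (v : 'cV[R]_3) : Prop := M *m v = v.

Definition det3 (a b c : 'cV[R]_3) : R :=
  \det (\matrix_(i < 3, j < 3)
          (if (j : nat) == 0%N then a i 0 else if (j : nat) == 1%N then b i 0 else c i 0)).

Definition is_eigenvector (M : 'M[R]_3) (x : 'cV[R]_3) : Prop :=
  x != 0 /\ exists a : R, M *m x = a *: x.

Definition positive_rel (M : 'M[R]_3) (v : 'cV[R]_3) : Prop :=
  forall x : 'cV[R]_3, x != 0 -> lor x x <= 0 -> ~ is_eigenvector M x ->
    0 < det3 v x (M *m x).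

Definition is_hom (rho : F2 -> 'M[R]_3) : Prop :=
  forall g h, rho (F2mul g h) = rho g *m rho h.

Definition comm_mx (a b : 'M[R]_3) : 'M[R]_3 := a *m b *m invmx a *m invmx b.

Inductive gen_by (P : 'M[R]_3 -> Prop) : 'M[R]_3 -> Prop :=
| gen_one : gen_by P 1%:M
| gen_in m : P m -> gen_by P m
| gen_mul m n : gen_by P m -> gen_by P n -> gen_by P (m *m n)
| gen_inv m : gen_by P m -> gen_by P (invmx m).

Fixpoint derived (S : 'M[R]_3 -> Prop) (k : nat) : 'M[R]_3 -> Prop :=
  match k with
  | 0%N => S
  | k'.+1 => gen_by (fun m => exists a b, derived S k' a /\ derived S k' b /\ m = comm_mx a b)
  end.

Definition solvable_mx (S : 'M[R]_3 -> Prop) : Prop :=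
  exists k, forall m, derived S k m -> m = 1%:M.

Definition image_rho (rho : F2 -> 'M[R]_3) (m : 'M[R]_3) : Prop := exists g, m = rho g.

Definition cocycle (rho : F2 -> 'M[R]_3) (u : F2 -> 'cV[R]_3) : Prop :=
  forall g h, u (F2mul g h) = u g + rho g *m u h.

Definition coboundary (rho : F2 -> 'M[R]_3) (u : F2 -> 'cV[R]_3) : Prop :=
  exists x : 'cV[R]_3, forall g, u g = rho g *m x - x.

Definition mu (v : 'I_3 -> 'cV[R]_3) (u : F2 -> 'cV[R]_3) : 'cV[R]_3 :=
  \col_(i < 3) lor (u (Agen i)) (v i).

End Lorentz.

(* Main.v *)
Require Import Defs.
From HB Require Import structures.
From mathcomp Require Import all_boot all_order all_algebra.
From mathcomp Require Import reals ring lra.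
From Stdlib Require Import Classical_Prop.
Set Implicit Arguments. Unset Strict Implicit. Unset Printing Implicit Defensive.
Import Order.TTheory GRing.Theory Num.Theory.
Local Open Scope ring_scope.

Section Toolkit.
Variable R : realType.
Definition mk3 (a b c d e f g h k : R) : 'M[R]_3 :=
  \matrix_(i < 3, j < 3) nth 0 (nth [::] [:: [:: a; b; c]; [:: d; e; f]; [:: g; h; k]] i) j.
Definition mkv (a b c : R) : 'cV[R]_3 := \col_(i < 3) nth 0 [:: a; b; c] i.

Ltac ords := let i := fresh "i" in let Hi := fresh "Hi" in
  case=> [[|[|[|i]]] Hi] //=.

Lemma mk3_ex (M : 'M[R]_3) : exists a b c d e f g h k, M = mk3 a b c d e f g h k.
Proof.
pose m i j := M (inord i) (inord j).
exists (m 0 0), (m 0 1), (m 0 2), (m 1 0), (m 1 1), (m 1 2), (m 2 0), (m 2 1), (m 2 2).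
apply/matrixP => i j; rewrite mxE /m.
by move: i j; ords; ords; congr (M _ _); apply: val_inj; rewrite /= inordK.
Qed.

Lemma mkv_ex (x : 'cV[R]_3) : exists a b c, x = mkv a b c.
Proof.
exists (x (inord 0) 0), (x (inord 1) 0), (x (inord 2) 0).
apply/matrixP => i j; rewrite mxE; rewrite (ord1 j).
by move: i; ords; congr (x _ _); apply: val_inj; rewrite /= inordK.
Qed.

Lemma mul_mk3 a b c d e f g h k a' b' c' d' e' f' g' h' k' :
  mk3 a b c d e f g h k *m mk3 a' b' c' d' e' f' g' h' k' =
  mk3 (a*a'+b*d'+c*g') (a*b'+b*e'+c*h') (a*c'+b*f'+c*k')
      (d*a'+e*d'+f*g') (d*b'+e*e'+f*h') (d*c'+e*f'+f*k')
      (g*a'+h*d'+k*g') (g*b'+h*e'+k*h') (g*c'+h*f'+k*k').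
Proof.
apply/matrixP => i j; rewrite !mxE !big_ord_recl big_ord0 !mxE /=.
by move: i j; ords; ords; ring.
Qed.

Lemma mul_mk3v a b c d e f g h k x y z :
  mk3 a b c d e f g h k *m mkv x y z = mkv (a*x+b*y+c*z) (d*x+e*y+f*z) (g*x+h*y+k*z).
Proof.
apply/matrixP => i j; rewrite !mxE !big_ord_recl big_ord0 !mxE /=.
by move: i; ords; ring.
Qed.

Lemma tr_mk3 a b c d e f g h k :
  (mk3 a b c d e f g h k)^T = mk3 a d g b e h c f k.
Proof. by apply/matrixP => i j; rewrite !mxE; move: i j; ords; ords. Qed.

Lemma add_mk3 a b c d e f g h k a' b' c' d' e' f' g' h' k' :
  mk3 a b c d e f g h k + mk3 a' b' c' d' e' f' g' h' k' =
  mk3 (a+a') (b+b') (c+c') (d+d') (e+e') (f+f') (g+g') (h+h') (k+k').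
Proof. by apply/matrixP => i j; rewrite !mxE; move: i j; ords; ords. Qed.

Lemma opp_mk3 a b c d e f g h k :
  - mk3 a b c d e f g h k = mk3 (-a) (-b) (-c) (-d) (-e) (-f) (-g) (-h) (-k).
Proof. by apply/matrixP => i j; rewrite !mxE; move: i j; ords; ords. Qed.

Lemma scale_mk3 s a b c d e f g h k :
  s *: mk3 a b c d e f g h k = mk3 (s*a) (s*b) (s*c) (s*d) (s*e) (s*f) (s*g) (s*h) (s*k).
Proof. by apply/matrixP => i j; rewrite !mxE; move: i j; ords; ords. Qed.

Lemma scalar_mk3 s : s%:M = mk3 s 0 0 0 s 0 0 0 s :> 'M[R]_3.
Proof. by apply/matrixP => i j; rewrite !mxE; move: i j; ords; ords. Qed.

Lemma one_mk3 : 1%:M = mk3 1 0 0 0 1 0 0 0 1 :> 'M[R]_3.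
Proof. exact: scalar_mk3. Qed.

Lemma J_mk3 : Jmx R = mk3 1 0 0 0 1 0 0 0 (-1).
Proof. by apply/matrixP => i j; rewrite !mxE; move: i j; ords; ords. Qed.

Lemma zero_mk3 : 0 = mk3 0 0 0 0 0 0 0 0 0.
Proof. by apply/matrixP => i j; rewrite !mxE; move: i j; ords; ords. Qed.

Lemma addv x y z x' y' z' : mkv x y z + mkv x' y' z' = mkv (x+x') (y+y') (z+z').
Proof. by apply/matrixP => i j; rewrite !mxE; move: i; ords. Qed.

Lemma oppv x y z : - mkv x y z = mkv (-x) (-y) (-z).
Proof. by apply/matrixP => i j; rewrite !mxE; move: i; ords. Qed.

Lemma scalev s x y z : s *: mkv x y z = mkv (s*x) (s*y) (s*z).
Proof. by apply/matrixP => i j; rewrite !mxE; move: i; ords. Qed.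

Lemma zerov : 0 = mkv 0 0 0.
Proof. by apply/matrixP => i j; rewrite !mxE; move: i; ords. Qed.

Lemma mk3_inj a b c d e f g h k a' b' c' d' e' f' g' h' k' :
  mk3 a b c d e f g h k = mk3 a' b' c' d' e' f' g' h' k' ->
  [/\ a = a', b = b', c = c', d = d' & [/\ e = e', f = f', g = g', h = h' & k = k']].
Proof.
move/matrixP => H.
have E := fun i j (Hi : (i < 3)%N) (Hj : (j < 3)%N) => H (Ordinal Hi) (Ordinal Hj).
move: (E 0 0 isT isT) (E 0 1 isT isT) (E 0 2 isT isT) (E 1 0 isT isT) (E 1 1 isT isT)
  (E 1 2 isT isT) (E 2 0 isT isT) (E 2 1 isT isT) (E 2 2 isT isT).
by rewrite !mxE /=.
Qed.

Lemma mkv_inj x y z x' y' z' : mkv x y z = mkv x' y' z' -> [/\ x = x', y = y' & z = z'].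
Proof.
move/matrixP => H.
have E := fun i (Hi : (i < 3)%N) => H (Ordinal Hi) ord0.
by move: (E 0 isT) (E 1 isT) (E 2 isT); rewrite !mxE /=.
Qed.

Lemma lor_mkv x y z x' y' z' : lor (mkv x y z) (mkv x' y' z') = x*x' + y*y' - z*z'.
Proof. by rewrite /lor !mxE !inordK. Qed.

Lemma mk3_22 a b c d e f g h k : mk3 a b c d e f g h k (inord 2) (inord 2) = k.
Proof. by rewrite mxE !inordK. Qed.

Lemma det_mk3 a b c d e f g h k :
  \det (mk3 a b c d e f g h k) = a*(e*k-f*h) - b*(d*k-f*g) + c*(d*h-e*g).
Proof.
rewrite (expand_det_row _ ord0) !big_ord_recl big_ord0 /cofactor.
rewrite !(expand_det_row _ ord0) !big_ord_recl !big_ord0 /cofactor !det_mx11 !mxE /=.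
rewrite /bump /=; ring.
Qed.

Lemma adj_mk3 a b c d e f g h k :
  \adj (mk3 a b c d e f g h k) = mk3 (e*k-f*h) (c*h-b*k) (b*f-c*e)
                                     (f*g-d*k) (a*k-c*g) (c*d-a*f)
                                     (d*h-e*g) (b*g-a*h) (a*e-b*d).
Proof.
apply/matrixP => i j; rewrite !mxE /cofactor.
rewrite !(expand_det_row _ ord0) !big_ord_recl !big_ord0 /cofactor !det_mx11 !mxE /=.
by move: i j; ords; ords; rewrite /bump /=; ring.
Qed.

Lemma det3_mkv a b c d e f g h k :
  det3 (mkv a b c) (mkv d e f) (mkv g h k) = a*(e*k-h*f) - d*(b*k-h*c) + g*(b*f-e*c).
Proof.
rewrite /det3.
have -> : (\matrix_(i < 3, j < 3)
          (if (j : nat) == 0%N then mkv a b c i 0 else if (j : nat) == 1%N then mkv d e f i 0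
          else mkv g h k i 0)) = mk3 a d g b e h c f k.
  by apply/matrixP => i j; rewrite !mxE; move: i j; ords; ords.
by rewrite det_mk3; ring.
Qed.


Lemma det3_0 (x y : 'cV[R]_3) : det3 0 x y = 0.
Proof.
have [a [b [c ->]]] := mkv_ex x; have [d [e [f ->]]] := mkv_ex y.
by rewrite zerov det3_mkv; ring.
Qed.

Lemma mkv_neq0 (x y z : R) : (x != 0) || (y != 0) || (z != 0) -> mkv x y z != 0.
Proof.
move=> H; apply/eqP; rewrite zerov => /mkv_inj [ex ey ez].
by move: H; rewrite ex ey ez eqxx.
Qed.

Lemma fixpos_neq0 (M : 'M[R]_3) v : SO21_0 M -> M != 1%:M -> positive_rel M v -> v != 0.
Proof.
move=> [HL [Hd Hp]] N1 P; apply/negP => /eqP v0; subst v.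
have key : forall x, x != 0 -> lor x x <= 0 -> exists l, M *m x = l *: x.
  move=> x H1 H2; apply: Classical_Prop.NNPP => H3.
  have H4 : ~ is_eigenvector M x by move=> -[_ [l Hl]]; apply: H3; exists l.
  by have := P x H1 H2 H4; rewrite det3_0 ltxx.
have [a [b [c [d [e [f [g [h [k EM]]]]]]]]] := mk3_ex M; subst M.
have nz : forall p q r: R, r != 0 -> mkv p q r != 0.
  by move=> p q r Hr; apply: mkv_neq0; rewrite Hr !orbT.
have t2 : (2 : R) != 0 by rewrite pnatr_eq0.
have [l1 H1] := key (mkv 0 0 1) (nz _ _ _ (oner_neq0 _)) (ltac:(rewrite lor_mkv; lra)).
have [l2 H2] := key (mkv 1 0 2) (nz _ _ _ t2) (ltac:(rewrite lor_mkv; lra)).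
have [l3 H3] := key (mkv 0 1 2) (nz _ _ _ t2) (ltac:(rewrite lor_mkv; lra)).
have [l4 H4] := key (mkv 1 1 2) (nz _ _ _ t2) (ltac:(rewrite lor_mkv; lra)).
move: H1 H2 H3 H4; rewrite !mul_mk3v !scalev.
move=> /mkv_inj [e1 e2 e3] /mkv_inj [e4 e5 e6] /mkv_inj [e7 e8 e9] /mkv_inj [e10 e11 e12].
move: HL Hp; rewrite tr_mk3 J_mk3 !mul_mk3 mk3_22 => /mk3_inj [q1 _ _ _ _] Hk.
have ea : a = k by lra.
have ee : e = k by lra.
have k1 : k = 1.
  have d0 : d = 0 by lra.
  have g0 : g = 0 by lra.
  have kk : k * k = 1 by move: q1; rewrite ea d0 g0; lra.
  nra.
move: N1; rewrite one_mk3.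
have -> : b = 0 by lra.
have -> : c = 0 by lra.
have -> : d = 0 by lra.
have -> : f = 0 by lra.
have -> : g = 0 by lra.
have -> : h = 0 by lra.
by rewrite ea ee k1 eqxx.
Qed.

Definition crossmx (x : 'cV[R]_3) : 'M[R]_3 :=
  mk3 0 (- x (inord 2) 0) (x (inord 1) 0) (x (inord 2) 0) 0 (- x (inord 0) 0)
      (- x (inord 1) 0) (x (inord 0) 0) 0.
Definition Kx (x : 'cV[R]_3) := Jmx R *m crossmx x.

Lemma crossmx_mkv p q r : crossmx (mkv p q r) = mk3 0 (-r) q r 0 (-p) (-q) p 0.
Proof. by rewrite /crossmx !mxE !inordK. Qed.

Ltac norm := rewrite ?(crossmx_mkv, J_mk3, mul_mk3, mul_mk3v, tr_mk3, adj_mk3,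
   add_mk3, opp_mk3, scale_mk3, scalar_mk3, addv, oppv, scalev, lor_mkv, det3_mkv, det_mk3).
Ltac fin3 := congr (mk3 _ _ _ _ _ _ _ _ _); ring.
Ltac finv := congr (mkv _ _ _); ring.

Lemma adjE (M : 'M[R]_3) : M^T *m Jmx R *m M = Jmx R -> \det M = 1 ->
  \adj M = Jmx R *m M^T *m Jmx R.
Proof.
move=> HL Hd.
have JJ : Jmx R *m Jmx R = 1%:M by rewrite J_mk3 mul_mk3 one_mk3; fin3.
have H1 : (Jmx R *m M^T *m Jmx R) *m M = 1%:M by rewrite -!mulmxA (mulmxA M^T) HL JJ.
have H2 := mulmx1C H1.
by rewrite -[\adj M]mulmx1 -H2 mulmxA mul_adj_mx Hd mul1mx.
Qed.

Lemma Kequiv (M : 'M[R]_3) x : M^T *m Jmx R *m M = Jmx R -> \det M = 1 ->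
  M *m Kx x = Kx (M *m x) *m M.
Proof.
move=> HL Hd.
have P : crossmx (M *m x) *m M = (\adj M)^T *m crossmx x.
  have [a [b [c [d [e [f [g [h [k ->]]]]]]]]] := mk3_ex M.
  have [p [q [r ->]]] := mkv_ex x.
  norm; fin3.
rewrite /Kx -mulmxA P adjE //.
have [a [b [c [d [e [f [g [h [k ->]]]]]]]]] := mk3_ex M.
have [p [q [r ->]]] := mkv_ex x.
norm; fin3.
Qed.

Lemma det_cyc x y : det3 y (Kx x *m y) (Kx x *m (Kx x *m y)) =
  lor x y * (lor x x * lor y y - lor x y ^+ 2).
Proof.
have [a [b [c ->]]] := mkv_ex x; have [p [q [r ->]]] := mkv_ex y.
rewrite /Kx; norm; ring.
Qed.

Definition colm (p q r : 'cV[R]_3) : 'M[R]_3 := \matrix_(i < 3, j < 3)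
  (if (j : nat) == 0%N then p i 0 else if (j : nat) == 1%N then q i 0 else r i 0).

Lemma colm_mkv a b c d e f g h k :
  colm (mkv a b c) (mkv d e f) (mkv g h k) = mk3 a d g b e h c f k.
Proof. by apply/matrixP => i j; rewrite !mxE; move: i j; ords; ords. Qed.

Lemma colm_mul (A : 'M[R]_3) p q r : A *m colm p q r = colm (A *m p) (A *m q) (A *m r).
Proof.
have [a [b [c [d [e [f [g [h [k ->]]]]]]]]] := mk3_ex A.
have [p1 [p2 [p3 ->]]] := mkv_ex p; have [q1 [q2 [q3 ->]]] := mkv_ex q.
have [r1 [r2 [r3 ->]]] := mkv_ex r.
rewrite !mul_mk3v !colm_mkv mul_mk3; fin3.
Qed.

Definition Qp (K : 'M[R]_3) (c0 c1 c2 : R) : 'M[R]_3 := c0%:M + c1 *: K + c2 *: (K *m K).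

Lemma Qp_comm K c0 c1 c2 d0 d1 d2 : Qp K c0 c1 c2 *m Qp K d0 d1 d2 = Qp K d0 d1 d2 *m Qp K c0 c1 c2.
Proof.
have [a [b [c [d [e [f [g [h [k ->]]]]]]]]] := mk3_ex K.
rewrite /Qp; norm; fin3.
Qed.

Lemma QpK K c0 c1 c2 : Qp K c0 c1 c2 *m K = K *m Qp K c0 c1 c2.
Proof.
have [a [b [c [d [e [f [g [h [k ->]]]]]]]]] := mk3_ex K.
rewrite /Qp; norm; fin3.
Qed.

Lemma Qp_y K y c0 c1 c2 : Qp K c0 c1 c2 *m y = colm y (K *m y) (K *m (K *m y)) *m mkv c0 c1 c2.
Proof.
have [a [b [c [d [e [f [g [h [k ->]]]]]]]]] := mk3_ex K.
have [p [q [r ->]]] := mkv_ex y.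
rewrite /Qp; norm; rewrite colm_mkv mul_mk3v; finv.
Qed.

Lemma cyc (M K : 'M[R]_3) y : M *m K = K *m M ->
  \det (colm y (K *m y) (K *m (K *m y))) != 0 -> exists c0 c1 c2, M = Qp K c0 c1 c2.
Proof.
move=> HMK Hd.
pose B := colm y (K *m y) (K *m (K *m y)).
have Bu : B \in unitmx by rewrite unitmxE unitfE; exact: Hd.
have [c0 [c1 [c2 Ec]]] := mkv_ex (invmx B *m (M *m y)).
exists c0, c1, c2.
have EB : B *m mkv c0 c1 c2 = M *m y by rewrite -Ec mulKVmx.
have Qy : Qp K c0 c1 c2 *m y = M *m y by rewrite Qp_y.
have Com : forall z : 'cV[R]_3, M *m (K *m z) = K *m (M *m z) by move=> z; rewrite !mulmxA HMK.
have ComQ : forall z : 'cV[R]_3, Qp K c0 c1 c2 *m (K *m z) = K *m (Qp K c0 c1 c2 *m z).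
  by move=> z; rewrite !mulmxA QpK.
have EMB : M *m B = Qp K c0 c1 c2 *m B.
  by rewrite /B !colm_mul !ComQ !Com Qy.
by rewrite -(mulmxK Bu M) EMB mulmxK.
Qed.

Lemma sq2_neq0 (a b : R) : (a != 0) || (b != 0) -> a ^+ 2 + b ^+ 2 != 0.
Proof.
move=> H; rewrite paddr_eq0 ?sqr_ge0 // !sqrf_eq0; apply/negP => /andP [/eqP a0 /eqP b0].
by move: H; rewrite a0 b0 eqxx.
Qed.

Lemma cyc_vec x : x != 0 -> exists y, \det (colm y (Kx x *m y) (Kx x *m (Kx x *m y))) != 0.
Proof.
have [a [b [c ->]]] := mkv_ex x => Hx.
have Hx' : (a != 0) || (b != 0) || (c != 0).
  case: (eqVneq a 0) => [a0|]; last by [].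
  case: (eqVneq b 0) => [b0|]; last by rewrite orbT.
  case: (eqVneq c 0) => [c0|]; last by rewrite orbT.
  by move: Hx; rewrite a0 b0 c0 -zerov eqxx.
have dE : forall y, \det (colm y (Kx (mkv a b c) *m y) (Kx (mkv a b c) *m (Kx (mkv a b c) *m y))) =
    lor (mkv a b c) y * (lor (mkv a b c) (mkv a b c) * lor y y - lor (mkv a b c) y ^+ 2).
  by move=> y; rewrite -det_cyc.
have [c0|cn0] := eqVneq c 0.
  exists (mkv a b 1); rewrite dE !lor_mkv c0.
  have ab : (a != 0) || (b != 0) by move: Hx'; rewrite c0 eqxx orbF.
  have := sq2_neq0 ab => H.
  have -> : (a * a + b * b - 0 * 1) * ((a * a + b * b - 0 * 0) * (a * a + b * b - 1 * 1) -
     (a * a + b * b - 0 * 1) ^+ 2) = - ((a ^+ 2 + b ^+ 2) * (a ^+ 2 + b ^+ 2)) by ring.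
  by rewrite oppr_eq0 mulf_neq0.
have [ab0|abn0] := boolP ((a == 0) && (b == 0)).
  move/andP: ab0 => [/eqP a0 /eqP b0].
  exists (mkv 1 0 1); rewrite dE !lor_mkv a0 b0.
  have -> : (0 * 1 + 0 * 0 - c * 1) * ((0 * 0 + 0 * 0 - c * c) * (1 * 1 + 0 * 0 - 1 * 1) -
     (0 * 1 + 0 * 0 - c * 1) ^+ 2) = c ^+ 3 by ring.
  by rewrite expf_neq0.
exists (mkv a b (-c)); rewrite dE !lor_mkv.
have ab : (a != 0) || (b != 0) by move: abn0; rewrite negb_and.
have H1 := sq2_neq0 ab.
have H2 : a ^+ 2 + b ^+ 2 + c ^+ 2 != 0.
  by rewrite paddr_eq0 ?addr_ge0 ?sqr_ge0 // sqrf_eq0 (negPf cn0) andbF.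
have -> : (a * a + b * b - c * - c) * ((a * a + b * b - c * c) * (a * a + b * b - - c * - c) -
     (a * a + b * b - c * - c) ^+ 2) =
   (a ^+ 2 + b ^+ 2 + c ^+ 2) * (c ^+ 2 * (a ^+ 2 + b ^+ 2)) * (-4) by ring.
rewrite !mulf_neq0 // ?expf_neq0 //.
by rewrite oppr_eq0 pnatr_eq0.
Qed.

Lemma stab_comm (M N : 'M[R]_3) (x : 'cV[R]_3) : SO21_0 M -> SO21_0 N -> x != 0 ->
  M *m x = x -> N *m x = x -> M *m N = N *m M.
Proof.
move=> [HM [dM _]] [HN [dN _]] nx Mx Nx.
have [y Hy] := cyc_vec nx.
have KM : M *m Kx x = Kx x *m M by rewrite Kequiv // Mx.
have KN : N *m Kx x = Kx x *m N by rewrite Kequiv // Nx.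
have [c0 [c1 [c2 ->]]] := cyc KM Hy.
have [d0 [d1 [d2 ->]]] := cyc KN Hy.
exact: Qp_comm.
Qed.

Definition lt (l : letter) : F2 := exist _ [:: l] (isT : reduced [:: l]).

Lemma F2_eq (g h : F2) : sval g = sval h -> g = h.
Proof. case: g h => [w Hw] [w' Hw'] /= E; subst; congr exist; exact: bool_irrelevance. Qed.

Lemma red_id w : reduced w -> red w = w.
Proof.
elim: w => // x w IH Hw /=.
have Hw' : reduced w := path_sorted Hw.
rewrite IH //; case: w {IH} Hw Hw' => //= y w /andP [Hxy _] _.
by rewrite /nocancel in Hxy; rewrite (negbTE Hxy).
Qed.

Lemma F2_ind (P : F2 -> Prop) : P F2one -> (forall l g, P g -> P (F2mul (lt l) g)) ->
  forall g, P g.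
Proof.
move=> P1 Ps [w Hw]; elim: w Hw => [|l w IH] Hw.
  by have -> : exist _ [::] Hw = F2one by apply: F2_eq.
have Hw' : reduced w := path_sorted Hw.
have -> : exist _ (l :: w) Hw = F2mul (lt l) (exist _ w Hw').
  by apply: F2_eq; exact: (esym (red_id Hw)).
exact/Ps/IH.
Qed.

Lemma linvK l : linv (linv l) = l.
Proof. by case: l => i b; rewrite /linv /= negbK. Qed.

Lemma lt_inv l : F2mul (lt l) (lt (linv l)) = F2one.
Proof. by apply: F2_eq; rewrite /= eqxx. Qed.

Lemma A3E : A3 = F2mul (lt (1, true)) (lt (0, true)).
Proof. by apply: F2_eq. Qed.

Lemma A123 : F2mul A1 (F2mul A2 A3) = F2one.
Proof. by apply: F2_eq. Qed.

Lemma A1E : A1 = lt (0, false). Proof. by apply: F2_eq. Qed.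
Lemma A2E : A2 = lt (1, false). Proof. by apply: F2_eq. Qed.

Lemma gen_lt (i : 'I_2) : lt (i, false) = A1 \/ lt (i, false) = A2.
Proof.
case: i => [[|[|i]] Hi] //; [left|right]; apply: F2_eq => /=; congr [:: (_, _)]; exact: val_inj.
Qed.

Lemma SO_unit (M : 'M[R]_3) : SO21_0 M -> M \in unitmx.
Proof. by case=> _ [d _]; rewrite unitmxE d unitr1. Qed.

Section Rho.
Variable rho : F2 -> 'M[R]_3.
Hypothesis Hh : is_hom rho.
Hypothesis Hs : forall g, SO21_0 (rho g).

Lemma rho_one : rho F2one = 1%:M.
Proof.
have E : rho F2one = rho F2one *m rho F2one by rewrite -Hh; congr rho; apply: F2_eq.
have U := SO_unit (Hs F2one).
by rewrite -(mulmxV U) {2}E -mulmxA mulmxV // mulmx1.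
Qed.

Lemma rho_ltinv l : rho (lt l) *m rho (lt (linv l)) = 1%:M.
Proof. by rewrite -Hh lt_inv rho_one. Qed.

Lemma fix_all (x : 'cV[R]_3) : rho A1 *m x = x -> rho A2 *m x = x -> forall g, rho g *m x = x.
Proof.
move=> H1 H2; apply: F2_ind; first by rewrite rho_one mul1mx.
move=> l g IH; rewrite Hh -mulmxA IH.
case: l => i [].
  have := rho_ltinv (i, true); rewrite /linv /= => E.
  have Hf : rho (lt (i, false)) *m x = x by case: (gen_lt i) => ->.
  by rewrite -{1}Hf mulmxA E mul1mx.
by case: (gen_lt i) => ->.
Qed.

Lemma solv_comm : (forall g h, rho g *m rho h = rho h *m rho g) -> solvable_mx (image_rho rho).
Proof.
move=> Hc; exists 1%N => m /=.
elim => [|m' [a [b [[g ->] [[h ->] ->]]]]|m1 m2 _ -> _ ->|m1 _ ->].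
- by [].
- rewrite /Defs.comm_mx Hc (mulmxK (SO_unit (Hs g))) mulmxV //; exact: SO_unit.
- by rewrite mulmx1.
- by rewrite invmx1.
Qed.

Lemma nofix : ~ solvable_mx (image_rho rho) ->
  forall x : 'cV[R]_3, rho A1 *m x = x -> rho A2 *m x = x -> x = 0.
Proof.
move=> NS x H1 H2; case: (eqVneq x 0) => // nx; exfalso; apply: NS; apply: solv_comm => g h.
by apply: (stab_comm (Hs g) (Hs h) nx); apply: fix_all.
Qed.

Lemma coc_one u : cocycle rho u -> u F2one = 0.
Proof.
move=> Hu; have E : u F2one = u F2one + u F2one.
  by rewrite -{3}(mul1mx (u F2one)) -rho_one -Hu; congr u; apply: F2_eq.
by move: E; rewrite -{1}[u F2one]addr0 => /addrI <-.
Qed.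

Lemma coc_inv u l : cocycle rho u -> u (lt (linv l)) = - (rho (lt (linv l)) *m u (lt l)).
Proof.
move=> Hu; have := coc_one Hu; rewrite -(lt_inv (linv l)) linvK Hu => /eqP.
by rewrite addr_eq0 => /eqP.
Qed.

Lemma coc_zero u : cocycle rho u -> u A1 = 0 -> u A2 = 0 -> forall g, u g = 0.
Proof.
move=> Hu H1 H2; apply: F2_ind; first exact: coc_one.
move=> l g IH; rewrite Hu IH mulmx0 addr0.
case: l => i [].
  have := coc_inv (i, false) Hu; rewrite /linv /= => ->.
  by case: (gen_lt i) => ->; rewrite ?H1 ?H2 mulmx0 oppr0.
by case: (gen_lt i) => ->.
Qed.

Lemma cob_coc (x : 'cV[R]_3) : cocycle rho (fun g => rho g *m x - x).
Proof. by move=> g h; rewrite Hh mulmxBr -mulmxA [in RHS]addrC addrA subrK. Qed.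

End Rho.

Lemma lor_mx (a b : 'cV[R]_3) : lor a b = (a^T *m Jmx R *m b) 0 0.
Proof.
have [a1 [a2 [a3 ->]]] := mkv_ex a; have [b1 [b2 [b3 ->]]] := mkv_ex b.
rewrite J_mk3 lor_mkv !(mxE, big_ord_recl, big_ord0) /=; ring.
Qed.

Lemma lor_iso (M : 'M[R]_3) a b : SO21_0 M -> lor (M *m a) (M *m b) = lor a b.
Proof.
case=> HL _; rewrite !lor_mx trmx_mul.
have -> : a^T *m M^T *m Jmx R *m (M *m b) = a^T *m (M^T *m Jmx R *m M) *m b by rewrite !mulmxA.
by rewrite HL.
Qed.

Lemma lorDl (x y v : 'cV[R]_3) : lor (x + y) v = lor x v + lor y v.
Proof.
have [a1 [a2 [a3 ->]]] := mkv_ex x; have [b1 [b2 [b3 ->]]] := mkv_ex y.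
have [c1 [c2 [c3 ->]]] := mkv_ex v; norm; ring.
Qed.

Lemma lorZl s (x v : 'cV[R]_3) : lor (s *: x) v = s * lor x v.
Proof.
have [a1 [a2 [a3 ->]]] := mkv_ex x; have [c1 [c2 [c3 ->]]] := mkv_ex v; norm; ring.
Qed.

Lemma lorNl (x v : 'cV[R]_3) : lor (- x) v = - lor x v.
Proof.
have [a1 [a2 [a3 ->]]] := mkv_ex x; have [c1 [c2 [c3 ->]]] := mkv_ex v; norm; ring.
Qed.

Lemma lorBl (x y v : 'cV[R]_3) : lor (x - y) v = lor x v - lor y v.
Proof. by rewrite lorDl lorNl. Qed.

Lemma mu_mkv (v : 'I_3 -> 'cV[R]_3) u :
  mu v u = mkv (lor (u A1) (v (inord 0))) (lor (u A2) (v (inord 1))) (lor (u A3) (v (inord 2))).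
Proof.
apply/matrixP => i j; rewrite !mxE; move: i; ords; congr (lor _ (v _)); apply: val_inj; by rewrite /= inordK.
Qed.

Lemma mu3 (rho : F2 -> 'M[R]_3) u (v3 : 'cV[R]_3) : is_hom rho -> (forall g, SO21_0 (rho g)) ->
  cocycle rho u -> rho A3 *m v3 = v3 ->
  lor (u A3) v3 = - (lor (u A1) v3 + lor (u A2) (rho A2 *m v3)).
Proof.
move=> Hh Hs Hu H3.
have c1 : u (lt (1, true)) = - (rho (lt (1, true)) *m u A2) by rewrite A2E; exact: (coc_inv Hh Hs (1, false) Hu).
have c0 : u (lt (0, true)) = - (rho (lt (0, true)) *m u A1) by rewrite A1E; exact: (coc_inv Hh Hs (0, false) Hu).
have R3 : rho A3 = rho (lt (1, true)) *m rho (lt (0, true)) by rewrite A3E Hh.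
have I2 : rho (lt (1, true)) *m rho A2 = 1%:M by rewrite A2E; exact: (rho_ltinv Hh Hs (1, true)).
rewrite {1}A3E Hu c1 c0 mulmxN lorDl !lorNl mulmxA -R3.
have e1 : lor (rho A3 *m u A1) v3 = lor (u A1) v3 by rewrite -{1}H3 (lor_iso _ _ (Hs _)).
have e2 : lor (rho (lt (1, true)) *m u A2) v3 = lor (u A2) (rho A2 *m v3).
  by rewrite -{1}(mul1mx v3) -I2 -mulmxA (lor_iso _ _ (Hs _)).
by rewrite e1 e2; lra.
Qed.

Section Affine.
Variable rho : F2 -> 'M[R]_3.
Hypothesis Hh : is_hom rho.
Hypothesis Hs : forall g, SO21_0 (rho g).
Variables a b : 'cV[R]_3.

Definition tv (i : 'I_2) := if (i : nat) == 0%N then a else b.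
Definition cl (l : letter) := if l.2 then - (rho (lt l) *m tv l.1) else tv l.1.
Definition gA l := (rho (lt l), cl l).
Definition amul (p q : 'M[R]_3 * 'cV[R]_3) := (p.1 *m q.1, p.2 + p.1 *m q.2).
Definition aone : 'M[R]_3 * 'cV[R]_3 := (1%:M, 0).
Definition phi (w : seq letter) := foldr (fun l acc => amul (gA l) acc) aone w.

Lemma amulA p q r : amul p (amul q r) = amul (amul p q) r.
Proof. by rewrite /amul /= !mulmxA mulmxDr addrA mulmxA. Qed.

Lemma amul1p p : amul aone p = p.
Proof. by case: p => p1 p2; rewrite /amul /= !mul1mx add0r. Qed.

Lemma ginv l : amul (gA l) (gA (linv l)) = aone.
Proof.
rewrite /amul /gA /= rho_ltinv //; congr (_, _).
case: l => i [] /=; rewrite /cl /=.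
  by rewrite addNr.
have := rho_ltinv Hh Hs (i, false); rewrite /linv /= => E.
by rewrite mulmxN mulmxA E mul1mx subrr.
Qed.

Lemma phi_cons l w : phi (cons_red l w) = amul (gA l) (phi w).
Proof.
case: w => [|y w] //=; case: eqP => // ->.
by rewrite amulA ginv amul1p.
Qed.

Lemma phi_red w : phi (red w) = phi w.
Proof. by elim: w => //= l w IH; rewrite phi_cons IH. Qed.

Lemma phi_cat w1 w2 : phi (w1 ++ w2) = amul (phi w1) (phi w2).
Proof. by elim: w1 => [|l w1 IH] /=; rewrite ?amul1p // IH amulA. Qed.

Lemma phi_mul g h : phi (sval (F2mul g h)) = amul (phi (sval g)) (phi (sval h)).
Proof. by rewrite /= phi_red phi_cat. Qed.

Lemma phi1 g : (phi (sval g)).1 = rho g.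
Proof.
elim/F2_ind: g => [|l g IH]; first by rewrite /= rho_one.
by rewrite phi_mul /= IH mulmx1 Hh.
Qed.

Lemma coc_exists : exists u, cocycle rho u /\ u A1 = a /\ u A2 = b.
Proof.
exists (fun g => (phi (sval g)).2); split; first by move=> g h; rewrite phi_mul /= phi1.
rewrite A1E A2E /= /cl /tv /= !mulmx0 !addr0.
by split.
Qed.
End Affine.

Lemma LA (Lm : 'M[R]_(3 + 3, 3)) (Dm : 'M[R]_(3, 3 + 3)) :
  (forall z : 'rV[R]_3, z *m Lm^T = 0 -> z = 0) ->
  (forall x : 'rV[R]_3, x *m Dm = 0 -> x = 0) ->
  Dm *m Lm = 0 ->
  (forall t : 'rV[R]_3, exists w, w *m Lm = t) /\
  (forall w : 'rV[R]_(3 + 3), w *m Lm = 0 -> exists x, w = x *m Dm).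
Proof.
move=> HL HD HDL.
have fL : row_free Lm^T := inj_row_free HL.
have rL : \rank Lm = 3%N by rewrite -mxrank_tr; apply/eqP; exact: fL.
have fD : row_free Dm := inj_row_free HD.
split.
  move=> t; have : (t <= Lm)%MS by apply: submx_full; rewrite /row_full rL.
  by case/submxP => D ->; exists D.
move=> w Hw.
have sDK : (Dm <= kermx Lm)%MS by apply/sub_kermxP.
have rK : \rank (kermx Lm) = 3%N by rewrite mxrank_ker rL.
have sKD : (kermx Lm <= Dm)%MS by rewrite -(mxrank_leqif_sup sDK).2 rK; exact: fD.
have : (w <= Dm)%MS by apply: submx_trans sKD; apply/sub_kermxP.
by case/submxP => x ->; exists x.
Qed.

Lemma colm_mulv p q r x y z : colm p q r *m mkv x y z = x *: p + y *: q + z *: r.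
Proof.
have [p1 [p2 [p3 ->]]] := mkv_ex p; have [q1 [q2 [q3 ->]]] := mkv_ex q.
have [r1 [r2 [r3 ->]]] := mkv_ex r.
by rewrite colm_mkv mul_mk3v !scalev !addv; finv.
Qed.

Definition Lfun (v1 v2 v3 w3 a b : 'cV[R]_3) :=
  mkv (lor a v1) (lor b v2) (- (lor a v3 + lor b w3)).
Definition Lmx (v1 v2 v3 w3 : 'cV[R]_3) : 'M[R]_(3 + 3, 3) :=
  col_mx (colm (Jmx R *m v1) 0 (- (Jmx R *m v3))) (colm 0 (Jmx R *m v2) (- (Jmx R *m w3))).
Definition Dmx (M1 M2 : 'M[R]_3) : 'M[R]_(3, 3 + 3) := row_mx (M1^T - 1%:M) (M2^T - 1%:M).

Lemma LmxE v1 v2 v3 w3 a b :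
  (row_mx a^T b^T *m Lmx v1 v2 v3 w3)^T = Lfun v1 v2 v3 w3 a b.
Proof.
rewrite mul_row_col raddfD /= !trmx_mul !trmxK.
have [a1 [a2 [a3 ->]]] := mkv_ex a; have [b1 [b2 [b3 ->]]] := mkv_ex b.
have [p1 [p2 [p3 ->]]] := mkv_ex v1; have [q1 [q2 [q3 ->]]] := mkv_ex v2.
have [r1 [r2 [r3 ->]]] := mkv_ex v3; have [s1 [s2 [s3 ->]]] := mkv_ex w3.
rewrite /Lfun J_mk3 !mul_mk3v !oppv zerov !colm_mkv !tr_mk3 !mul_mk3v addv !lor_mkv; finv.
Qed.

Lemma DmxE M1 M2 (x : 'cV[R]_3) :
  x^T *m Dmx M1 M2 = row_mx (M1 *m x - x)^T (M2 *m x - x)^T.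
Proof. by rewrite mul_mx_row !mulmxBr !mulmx1 !raddfB /= !trmx_mul. Qed.

Lemma indep (M1 M2 : 'M[R]_3) (v1 v2 v3 : 'cV[R]_3) (z0 z1 z2 : R) :
  M1 \in unitmx -> (forall x : 'cV[R]_3, M1 *m x = x -> M2 *m x = x -> x = 0) ->
  M1 *m v1 = v1 -> M1 *m (M2 *m v3) = v3 -> v1 != 0 -> v2 != 0 -> v3 != 0 ->
  z0 *: v1 - z2 *: v3 = 0 -> z1 *: v2 - z2 *: (M2 *m v3) = 0 ->
  [/\ z0 = 0, z1 = 0 & z2 = 0].
Proof.
move=> U NF F1 F3 n1 n2 n3 E1 E2.
have [z20|z2n] := eqVneq z2 0.
  move: E1 E2; rewrite z20 !scale0r !subr0 => /eqP; rewrite scaler_eq0 (negPf n1) orbF => /eqP ->.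
  by move/eqP; rewrite scaler_eq0 (negPf n2) orbF => /eqP ->.
exfalso; move/eqP: n3; apply.
have Ev3 : v3 = z2^-1 *: (z0 *: v1).
  by move/eqP: E1; rewrite subr_eq0 => /eqP ->; rewrite scalerA mulVf // scale1r.
have M1v3 : M1 *m v3 = v3 by rewrite Ev3 -!scalemxAr F1.
apply: NF => //.
by rewrite -[M2 *m v3](mulKmx U) F3 -{1}M1v3 mulKmx.
Qed.

Lemma Jcancel (y : 'cV[R]_3) : Jmx R *m y = 0 -> y = 0.
Proof.
have JJ : Jmx R *m Jmx R = 1%:M by rewrite J_mk3 mul_mk3 one_mk3; fin3.
by move=> H; rewrite -(mul1mx y) -JJ -mulmxA H mulmx0.
Qed.

Lemma coc_sub (rho : F2 -> 'M[R]_3) u u' : cocycle rho u -> cocycle rho u' ->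
  cocycle rho (fun g => u g - u' g).
Proof. by move=> Hu Hu' g h; rewrite Hu Hu' mulmxBr opprD addrACA. Qed.
End Toolkit.

Unset Implicit Arguments. Set Strict Implicit.

Theorem lemma6p1 (R : realType) (rho0 : F2 -> 'M[R]_3) (v : 'I_3 -> 'cV[R]_3) :
  is_hom rho0 ->
  (forall g, SO21_0 (rho0 g)) ->
  (forall i : 'I_3, hyperbolic (rho0 (Agen i)) \/ parabolic (rho0 (Agen i))) ->
  ~ solvable_mx (image_rho rho0) ->
  (forall i : 'I_3, Fixv (rho0 (Agen i)) (v i) /\ positive_rel (rho0 (Agen i)) (v i)) ->
  [/\ (* well defined on H^1 *)
      (forall u u', cocycle rho0 u -> cocycle rho0 u' ->
          coboundary rho0 (fun g => u g - u' g) -> mu v u = mu v u'),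
      (* linear *)
      (forall (a : R) u u', mu v (fun g => a *: u g + u' g) = a *: mu v u + mu v u'),
      (* injective on H^1 *)
      (forall u, cocycle rho0 u -> mu v u = 0 -> coboundary rho0 u) &
      (* surjective *)
      (forall t : 'cV[R]_3, exists u, cocycle rho0 u /\ mu v u = t)].
Proof.
move=> Hh Hs Htype Hns Hv.
have AG0 : Agen (inord 0) = A1 by rewrite /Agen inordK.
have AG1 : Agen (inord 1) = A2 by rewrite /Agen inordK.
have AG2 : Agen (inord 2) = A3 by rewrite /Agen inordK.
have fix_i : forall i, rho0 (Agen i) *m v i = v i := fun i => (Hv i).1.
have nz : forall i, v i != 0.
  move=> i; have [Hf Hp] := Hv i; apply: (fixpos_neq0 (Hs _) _ Hp).
  by case: (Htype i) => -[].
have NF := nofix Hh Hs Hns.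
have U1 := SO_unit (Hs A1).
have M123 : rho0 A1 *m (rho0 A2 *m rho0 A3) = 1%:M by rewrite -!Hh A123 (rho_one Hh Hs).
have F1 : rho0 A1 *m v (inord 0) = v (inord 0) by rewrite -AG0 fix_i.
have F3 : rho0 A3 *m v (inord 2) = v (inord 2) by rewrite -AG2 fix_i.
have F3' : rho0 A1 *m (rho0 A2 *m v (inord 2)) = v (inord 2).
  by rewrite -{1}F3 !mulmxA -(mulmxA (rho0 A1)) M123 mul1mx.
have cob0 : forall y, mu v (fun g => rho0 g *m y - y) = 0.
  move=> y; apply/matrixP => i j; rewrite !mxE lorBl -{1}(fix_i i) lor_iso //; lra.
pose w3 := rho0 A2 *m v (inord 2).
pose Lm := Lmx (v (inord 0)) (v (inord 1)) (v (inord 2)) w3.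
pose Dm := Dmx (rho0 A1) (rho0 A2).
have muL : forall u, cocycle rho0 u ->
    mu v u = Lfun (v (inord 0)) (v (inord 1)) (v (inord 2)) w3 (u A1) (u A2).
  by move=> u Hu; rewrite mu_mkv /Lfun (mu3 Hh Hs Hu F3).
have HL : forall z : 'rV[R]_3, z *m Lm^T = 0 -> z = 0.
  move=> z; rewrite /Lm /Lmx tr_col_mx mul_mx_row => /eqP; rewrite row_mx_eq0.
  case/andP => /eqP P0 /eqP Q0.
  have [z0 [z1 [z2 Ez]]] := mkv_ex z^T.
  move: P0 Q0; rewrite -[z]trmxK Ez -!trmx_mul => /(congr1 trmx); rewrite trmxK trmx0.
  move=> P0 /(congr1 trmx); rewrite trmxK trmx0 => Q0.
  move: P0 Q0; rewrite !colm_mulv !scaler0 add0r addr0 => P0 Q0.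
  have E1 : z0 *: v (inord 0) - z2 *: v (inord 2) = 0.
    by apply: Jcancel; rewrite mulmxBr -!scalemxAr -P0 scalerN.
  have E2 : z1 *: v (inord 1) - z2 *: w3 = 0.
    by apply: Jcancel; rewrite mulmxBr -!scalemxAr -Q0 scalerN.
  have [e0 e1 e2] := indep U1 NF F1 F3' (nz _) (nz _) (nz _) E1 E2.
  by rewrite e0 e1 e2 -zerov trmx0.
have HD : forall x : 'rV[R]_3, x *m Dm = 0 -> x = 0.
  move=> x; rewrite -[x]trmxK DmxE => /eqP; rewrite row_mx_eq0.
  case/andP => /eqP E1 /eqP E2.
  have E1' : rho0 A1 *m x^T = x^T by apply/eqP; rewrite -subr_eq0 -trmx0; apply/eqP; rewrite -E1 trmxK.
  have E2' : rho0 A2 *m x^T = x^T by apply/eqP; rewrite -subr_eq0 -trmx0; apply/eqP; rewrite -E2 trmxK.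
  by rewrite (NF _ E1' E2') trmx0.
have HDL : Dm *m Lm = 0.
  have H : forall x : 'rV[R]_3, x *m Dm *m Lm = 0.
    move=> x; rewrite -[x]trmxK DmxE; apply: trmx_inj; rewrite LmxE trmx0.
    by rewrite -(muL _ (cob_coc Hh x^T)) cob0.
  apply/row_matrixP => i; rewrite row0 -[Dm]mul1mx -mulmxA row_mul mulmxA; exact: H.
have [Hsurj Hinj] := LA HL HD HDL.
split.
- move=> u u' _ _ [x Hx]; apply/matrixP => i j; rewrite !mxE.
  by apply/eqP; rewrite -subr_eq0 -lorBl Hx lorBl -{1}(fix_i i) lor_iso // subrr.
- by move=> a u u'; apply/matrixP => i j; rewrite !mxE lorDl lorZl.
- move=> u Hu H0.
  have : row_mx (u A1)^T (u A2)^T *m Lm = 0 by apply: trmx_inj; rewrite LmxE trmx0 -muL.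
  case/Hinj => x; rewrite -[x]trmxK DmxE => /eq_row_mx [/trmx_inj E1 /trmx_inj E2].
  exists x^T.
  have Hd := coc_zero Hh Hs (coc_sub Hu (cob_coc Hh x^T)).
  move=> g; apply/eqP; rewrite -subr_eq0; apply/eqP; apply: Hd.
    by rewrite E1 subrr.
  by rewrite E2 subrr.
- move=> t; have [w Hw] := Hsurj t^T.
  have Ew : w = row_mx ((lsubmx w)^T)^T ((rsubmx w)^T)^T by rewrite !trmxK hsubmxK.
  have [u [Hu [Ha Hb]]] := coc_exists Hh Hs (lsubmx w)^T (rsubmx w)^T.
  exists u; split => //.
  by rewrite muL // Ha Hb -LmxE -Ew Hw trmxK.
Qed.
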